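(* Every $q$-Gauss sequence is a $q$-Euler–Gauss sequence.
   Context: $\mu$ is the Möbius function, $[n]_q=1+q+\dots+q^{n-1}$; polynomial congruences modulo $[n]_q$ mean divisibility of the difference by $[n]_q$ in $\mathbb{Z}[q]$. A sequence $(a_n(q))$ in $\mathbb{Z}[q]$ is a $q$-Gauss sequence if $\sum_{d\mid n}\mu(d)a_{n/d}(q^d)\equiv0\pmod{[n]_q}$ for all $n\ge1$; it is a $q$-Euler–Gauss sequence if for all $n\ge1$, $\prod_{d\mid n,\,\mu(d)=1}a_{n/d}(q^d)\equiv\prod_{d\mid n,\,\mu(d)=-1}a_{n/d}(q^d)\pmod{[n]_q}$. *)

(* Defs.v *)
From mathcomp Require Import all_boot all_order all_algebra.
Set Implicit Arguments. Unset Strict Implicit. Unset Printing Implicit Defensive.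
Import GRing.Theory.
Local Open Scope ring_scope.

(* Moebius function: mu n = (-1)^k if n is a product of k distinct primes,
   0 if n has a square factor (mu 1 = 1; value at 0 irrelevant). *)
Definition moebius (n : nat) : int :=
  if all (fun p => logn p n == 1%N) (primes n) then (-1) ^+ size (primes n) else 0.

Definition qint (n : nat) : {poly int} := \sum_(i < n) 'X^i.

Definition pcong (m f g : {poly int}) : Prop := exists r : {poly int}, f - g = r * m.

Definition subst_pow (a : nat -> {poly int}) (n d : nat) : {poly int} :=
  a (n %/ d)%N \Po 'X^d.

Definition q_Gauss (a : nat -> {poly int}) : Prop :=
  forall n : nat, (0 < n)%N ->
    pcong (qint n) (\sum_(d <- divisors n) subst_pow a n d *~ moebius d) 0.

Definition q_Euler_Gauss (a : nat -> {poly int}) : Prop :=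
  forall n : nat, (0 < n)%N ->
    pcong (qint n)
      (\prod_(d <- divisors n | moebius d == 1) subst_pow a n d)
      (\prod_(d <- divisors n | moebius d == -1) subst_pow a n d).

(* Main.v *)
Require Import Defs.
From mathcomp Require Import all_boot all_order all_algebra all_field.
Import GRing.Theory.
Local Open Scope ring_scope.
Set Implicit Arguments. Unset Strict Implicit.
Lemma mu1 : moebius 1 = 1.
Proof. by rewrite /moebius. Qed.

Lemma muM p d : prime p -> (0 < d)%N -> ~~ (p %| d)%N ->
  moebius (p * d) = - moebius d.
Proof.
move=> pp d0 npd.
have p0 := prime_gt0 pp.
have np : p \notin primes d by rewrite mem_primes pp d0 npd.
have pd : primes (p * d) =i p :: primes d.
  by move=> q; rewrite primesM // primes_prime // !in_cons in_nil orbF.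
have sz : size (primes (p * d)) = (size (primes d)).+1.
  by rewrite (perm_size (uniq_perm (primes_uniq _) _ pd)) //= np primes_uniq.
rewrite /moebius (eq_all_r pd) sz /= lognM // logn_prime // eqxx.
have -> : logn p d = 0%N by apply/eqP; rewrite -leqn0 leqNgt logn_gt0.
have -> : all (fun q => logn q (p * d) == 1%N) (primes d) =
          all (fun q => logn q d == 1%N) (primes d).
  apply: eq_in_all => q qd; rewrite lognM // logn_prime //.
  by case: (eqVneq q p) => [eqp|]; [rewrite -eqp qd in np|].
by case: (all _ (primes d)); rewrite ?oppr0 // exprS mulN1r.
Qed.

Lemma mu0 p d : prime p -> (0 < d)%N -> (p %| d)%N -> moebius (p * d) = 0.
Proof.
move=> pp d0 pd.
have p0 := prime_gt0 pp.
rewrite /moebius; case: ifP => // /allP /(_ p).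
rewrite mem_primes pp muln_gt0 p0 d0 dvdn_mulr //= => /(_ isT).
rewrite lognM // logn_prime // eqxx.
have : (0 < logn p d)%N by rewrite logn_gt0 mem_primes pp d0 pd.
by case: (logn p d).
Qed.
Definition Sq n := [seq d <- divisors n | moebius d != 0].

Lemma memSq n x : (0 < n)%N -> (x \in Sq n) = (x %| n)%N && (moebius x != 0).
Proof. by move=> n0; rewrite mem_filter -dvdn_divisors // andbC. Qed.

Lemma Sq_split p k m : prime p -> (0 < k)%N -> (0 < m)%N -> coprime p m ->
  perm_eq (Sq (p ^ k * m)) (Sq m ++ map (muln p) (Sq m)).
Proof.
move=> pp k0 m0 cpm.
have p0 := prime_gt0 pp.
have N0 : (0 < p ^ k * m)%N by rewrite muln_gt0 expn_gt0 p0.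
have injp : injective (muln p).
  by move=> a b /eqP; rewrite eqn_pmul2l // => /eqP.
have ndm x : (p %| x)%N -> (x %| m)%N = false.
  move=> px; apply/negP => xm.
  by move: cpm; rewrite prime_coprime // (dvdn_trans px xm).
apply: uniq_perm.
- by rewrite filter_uniq // divisors_uniq.
- rewrite cat_uniq filter_uniq ?divisors_uniq //= (map_inj_uniq injp).
  rewrite filter_uniq ?divisors_uniq // andbT.
  apply/hasPn => x /mapP [y _ ->].
  by rewrite memSq // ndm // dvdn_mulr.
move=> x; rewrite mem_cat memSq // memSq //.
have [->|x0] := posnP x.
  rewrite dvd0n (negbTE (lt0n_neq0 N0)) dvd0n (gtn_eqF m0) /=.
  symmetry; apply/negP => /mapP [y]; rewrite memSq // => /andP [ym _] /esym /eqP.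
  rewrite muln_eq0 (gtn_eqF p0) /= => /eqP y0.
  by move: ym; rewrite y0 dvd0n (gtn_eqF m0).
have [px|npx] := boolP (p %| x)%N.
  rewrite ndm //=.
  rewrite -(divnK px) mulnC (mem_map injp) memSq //.
  have y0 : (0 < x %/ p)%N by rewrite divn_gt0 // dvdn_leq.
  have [py|npy] := boolP (p %| x %/ p)%N.
    by rewrite mu0 // eqxx !andbF ndm.
  rewrite muM // oppr_eq0; congr (_ && _).
  case: k k0 N0 => // k' _ _.
  rewrite expnS -mulnA dvdn_pmul2l // Gauss_dvdr //.
  by rewrite coprime_sym coprimeXl // prime_coprime.
have -> : (x \in map (muln p) (Sq m)) = false.
  by apply/negbTE/mapP => [[y _ xy]]; move: npx; rewrite xy dvdn_mulr.
rewrite orbF; congr (_ && _).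
by rewrite Gauss_dvdr // coprime_sym coprimeXl // prime_coprime.
Qed.
Definition ev (f : {poly int}) (x : algC) : algC := (map_poly intr f).[x].

Lemma evB f g x : ev (f - g) x = ev f x - ev g x.
Proof. by rewrite /ev rmorphB hornerD hornerN. Qed.

Lemma ev_prod (s : seq nat) (P : pred nat) (F : nat -> {poly int}) x :
  ev (\prod_(i <- s | P i) F i) x = \prod_(i <- s | P i) ev (F i) x.
Proof. by rewrite /ev rmorph_prod horner_prod. Qed.

Lemma ev_sum (s : seq nat) (P : pred nat) (F : nat -> {poly int}) x :
  ev (\sum_(i <- s | P i) F i) x = \sum_(i <- s | P i) ev (F i) x.
Proof. by rewrite /ev rmorph_sum horner_sum. Qed.

Lemma evMz f z x : ev (f *~ z) x = ev f x * z%:~R.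
Proof. by rewrite /ev rmorphMz hornerMz mulrzr. Qed.

Lemma evM f g x : ev (f * g) x = ev f x * ev g x.
Proof. by rewrite /ev rmorphM hornerM. Qed.

Lemma ev_sub a n d x : ev (subst_pow a n d) x = ev (a (n %/ d)%N) (x ^+ d).
Proof. by rewrite /ev /subst_pow map_comp_poly map_polyXn horner_comp hornerXn. Qed.

Lemma ev_qint n x : x ^+ n = 1 -> x != 1 -> ev (qint n) x = 0.
Proof.
move=> xn x1; rewrite /ev /qint rmorph_sum horner_sum.
have : (x - 1) * \sum_(i < n) x ^+ i == 0 by rewrite -subrX1 xn subrr eqxx.
rewrite mulf_eq0 subr_eq0 (negbTE x1) /= => /eqP S0.
rewrite -{2}S0; apply: eq_bigr => i _; by rewrite map_polyXn hornerXn.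
Qed.
Lemma qint_poly n : qint n = \poly_(i < n) 1.
Proof. by rewrite poly_def /qint; apply: eq_bigr => i _; rewrite scale1r. Qed.

Lemma qint_monic n : (0 < n)%N -> qint n \is monic.
Proof. by move=> n0; rewrite qint_poly monicE lead_coef_poly ?oner_neq0. Qed.

Lemma size_qint n : size (qint n) = n.
Proof.
case: n => [|n]; first by rewrite /qint big_ord0 size_poly0.
by rewrite qint_poly size_poly_eq ?oner_neq0.
Qed.

Lemma div_crit n f z : (0 < n)%N -> n.-primitive_root z ->
  (forall k, (0 < k < n)%N -> ev f (z ^+ k) = 0) -> pcong (qint n) f 0.
Proof.
move=> n0 prz Hf.
set q := qint n.
have mq : q \is monic by exact: qint_monic.
have E := Pdiv.RingMonic.rdivp_eq mq f.
exists (Pdiv.CommonRing.rdivp f q); rewrite subr0.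
set r := Pdiv.CommonRing.rmodp f q in E *.
suff r0 : r = 0 by rewrite {1}E r0 addr0.
have q0 : q != 0 by apply: monic_neq0.
have sr := Pdiv.Ring.ltn_rmodpN0 f q0.
rewrite -/r /q size_qint in sr.
apply/eqP; rewrite -size_poly_eq0.
have szR : size (map_poly (intr : int -> algC) r) = size r.
  by apply: size_map_inj_poly => //; apply: intr_inj.
rewrite -szR size_poly_eq0; apply/negPn/negP => R0.
set rs := [seq z ^+ k | k <- iota 1 n.-1].
have : (size rs < size (map_poly (intr : int -> algC) r))%N.
  apply: (max_poly_roots R0).
- apply/allP => y /mapP [k]; rewrite mem_iota add1n prednK // => kn ->.
  have Er : r = f - Pdiv.CommonRing.rdivp f q * q.
    by apply/eqP; rewrite eq_sym subr_eq addrC -E.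
  rewrite /root -/(ev r (z ^+ k)) Er evB evM Hf //.
  rewrite ev_qint ?mulr0 ?subr0 //.
    by rewrite -exprM mulnC exprM (prim_expr_order prz) expr1n.
  by case/andP: kn => k0 kn; rewrite -(prim_order_dvd prz) gtnNdvd.
- rewrite map_inj_in_uniq ?iota_uniq // => i j.
  rewrite !mem_iota !add1n prednK // => /andP [_ ilt] /andP [_ jlt] /eqP.
  by rewrite (eq_prim_root_expr prz) !modn_small // => /eqP.
rewrite size_map size_iota szR.
by rewrite ltnNge -ltnS prednK // sr.
Qed.

Lemma gauss_ev a N x : q_Gauss a -> (0 < N)%N -> x ^+ N = 1 -> x != 1 ->
  \sum_(d <- Sq N) ev (a (N %/ d)%N) (x ^+ d) * (moebius d)%:~R = 0.
Proof.
move=> G N0 xN x1; have [r Er] := G N N0.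
have := congr1 (fun f => ev f x) Er; rewrite /= evM ev_qint // mulr0.
rewrite subr0 ev_sum => E0; apply: etrans E0.
rewrite [RHS](bigID (fun d => moebius d != 0)) /=.
rewrite [X in _ = _ + X]big1 ?addr0; last first.
  by move=> d /negPn /eqP ->; rewrite mulr0z /ev rmorph0 horner0.
rewrite big_filter; apply: eq_bigr => d _.
by rewrite evMz ev_sub.
Qed.

Lemma key a : q_Gauss a -> forall N p k m x, prime p -> (0 < k)%N -> (0 < m)%N ->
  coprime p m -> N = (p ^ k * m)%N -> x ^+ N = 1 -> x ^+ m != 1 ->
  ev (a N) x = ev (a (N %/ p)%N) (x ^+ p).
Proof.
move=> G; elim/ltn_ind => N IH p k m x pp k0 m0 cpm EN xN xm.
have p0 := prime_gt0 pp.
have N0 : (0 < N)%N by rewrite EN muln_gt0 expn_gt0 p0.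
have x1 : x != 1 by apply: contraNneq xm => ->; rewrite expr1n.
have := gauss_ev G N0 xN x1.
rewrite EN (perm_big _ (Sq_split pp k0 m0 cpm)) big_cat big_map /= -big_split /=.
have S1 : 1%N \in Sq m by rewrite memSq // dvd1n mu1 oner_neq0.
rewrite (bigD1_seq 1%N S1) ?filter_uniq ?divisors_uniq //= big1_seq.
  have mp : moebius (p * 1) = -1.
    by rewrite muM ?mu1 // dvdn1; apply/negP => /eqP p1; rewrite p1 in pp.
  rewrite addr0 mp mu1 !muln1 divn1 expr1 => /eqP.
  by rewrite mulr1 mulrN1 subr_eq0 => /eqP.
move=> d /andP [d1 dS]; move: (dS); rewrite memSq // => /andP [dm mud].
have d0 : (0 < d)%N by apply: dvdn_gt0 dm.
have npd : ~~ (p %| d)%N.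
  by apply: contraL cpm => pd; rewrite prime_coprime // negbK (dvdn_trans pd dm).
rewrite muM // -EN.
have dN : (d %| N)%N by rewrite EN dvdn_mull.
have -> : ev (a (N %/ d)%N) (x ^+ d) = ev (a (N %/ (p * d))%N) (x ^+ (p * d)).
  rewrite mulnC divnMA exprM.
  apply: (IH (N %/ d)%N _ p k (m %/ d)%N (x ^+ d)) => //.
  - by rewrite ltn_Pdiv // ltn_neqAle eq_sym d1 d0.
  - by rewrite divn_gt0 // dvdn_leq.
  - by apply: coprime_dvdr cpm; apply: dvdn_div.
  - by rewrite EN muln_divA.
  - by rewrite -exprM mulnC divnK.
  - by rewrite -exprM mulnC divnK.
by rewrite rmorphN /= mulrN subrr.
Qed.

Lemma to_Sq n (c : int) (F : nat -> algC) : c != 0 ->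
  \prod_(d <- divisors n | moebius d == c) F d = \prod_(d <- Sq n | moebius d == c) F d.
Proof.
move=> c0; rewrite big_filter_cond; apply: eq_bigl => d.
by case: (eqVneq (moebius d) c) => [->|]; rewrite ?c0 ?andbF.
Qed.

Theorem theorem5 (a : nat -> {poly int}) : q_Gauss a -> q_Euler_Gauss a.
Proof.
move=> G n n0; have [z prz] := C_prim_root_exists n0.
match goal with |- pcong _ ?P1 ?P2 =>
  suff [r Er] : pcong (qint n) (P1 - P2) 0 by exists r; rewrite -Er subr0 end.
apply: (div_crit n0 prz) => j /andP [j0 jn].
set x := z ^+ j.
have ndj : ~~ (n %| j)%N by rewrite gtnNdvd.
have /hasP [p pin npj] : has (fun p : nat => ~~ (n`_p %| j)%N) (primes n).
  rewrite -(negbK (has _ _)) -all_predC; apply/negP => /allP H.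
  apply: (negP ndj); apply/dvdn_partP => // p pin.
  by have := H p pin; rewrite /= negbK.
have pp : prime p by move: pin; rewrite mem_primes => /andP [].
set k := logn p n; set m := (n`_p^')%N.
have k0 : (0 < k)%N by rewrite /k logn_gt0.
have m0 : (0 < m)%N by apply: part_gt0.
have En : n = (p ^ k * m)%N by rewrite -p_part partnC.
have cpm : coprime p m.
  by rewrite -(coprime_pexpl _ _ k0) -p_part coprime_partC.
have xn : x ^+ n = 1 by rewrite /x -exprM mulnC exprM (prim_expr_order prz) expr1n.
have xm : x ^+ m != 1.
  rewrite /x -exprM -(prim_order_dvd prz); apply: contra npj => H.
  rewrite -(@Gauss_dvdl _ _ m (coprime_partC _ _ _)).
  exact: dvdn_trans (dvdn_part _ _) H.
rewrite evB !ev_prod; apply/eqP; rewrite subr_eq0; apply/eqP.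
rewrite !to_Sq ?oppr_eq0 ?oner_neq0 //.
rewrite En !(perm_big _ (Sq_split pp k0 m0 cpm)) !big_cat !big_map /= -En.
have Hpd c : \prod_(d <- Sq m | moebius (p * d) == c) ev (subst_pow a n (p * d)) x =
             \prod_(d <- Sq m | moebius d == - c) ev (subst_pow a n d) x.
  rewrite big_seq_cond [RHS]big_seq_cond; apply: eq_big => d.
    case dS: (d \in Sq m) => //=; move: dS; rewrite memSq // => /andP [dm _].
    have d0 : (0 < d)%N by apply: dvdn_gt0 dm.
    have npd : ~~ (p %| d)%N.
      by apply: contraL cpm => pd; rewrite prime_coprime // negbK (dvdn_trans pd dm).
    by rewrite muM // eqr_oppLR.
  move=> /andP [dS _]; move: dS; rewrite memSq // => /andP [dm _].
  have d0 : (0 < d)%N by apply: dvdn_gt0 dm.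
  have dN : (d %| n)%N by rewrite En dvdn_mull.
  rewrite !ev_sub mulnC divnMA exprM; symmetry.
  apply: (@key a G (n %/ d)%N p k (m %/ d)%N (x ^+ d)) => //.
  - by rewrite divn_gt0 // dvdn_leq.
  - by apply: coprime_dvdr cpm; apply: dvdn_div.
  - by rewrite En muln_divA.
  - by rewrite -exprM mulnC divnK.
  - by rewrite -exprM mulnC divnK.
by rewrite !Hpd opprK mulrC.
Qed.
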